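(* Let $\mathcal{G}$ be a multi-player Markov game and suppose there exists a stationary product policy $\pi^\star=(\pi^\star_1,\dots,\pi^\star_n)$ such that $\sum_{i=1}^nV_i^{\pi^\star_i,\pi_{-i}}(\rho)-\sum_{i=1}^nV_i^{\pi}(\rho)\ge0$ for every stationary product policy $\pi$. Then, with $x^\star$ the parameterization of $\pi^\star$, $$\langle x-x^\star,F_{\mathcal{G}}(x)\circ\Lambda(x,x^\star)\rangle\ge0\quad\text{for all }x\in\mathcal{X}.$$ In particular, if $\mathcal{G}$ admits a single controller $c$, then $\langle x-x^\star,F_{\mathcal{G}}(x)\circ A(x)\circ W(x^\star)\rangle\ge0$ for all $x\in\mathcal{X}$, where $A_i(x)[s,a_i]=1$ and $W_i(x^\star)[s,a_i]=1$ for $i\ne c$, while $A_c(x)[s,a_c]=(\tilde d^{\pi_c}_\rho[s])^{-1}$ and $W_c(x^\star)[s,a_c]=\tilde d^{\pi^\star_c}_\rho[s]$.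
   Context: A multi-player Markov game: players $[n]$; finite states $\mathcal{S}$; finite nonempty action sets $\mathcal{A}_i$, $\mathcal{A}=\prod_i\mathcal{A}_i$; transitions $\mathbb{P}(s'\mid s,a)$ with $\zeta:=\min_{(s,a)}(1-\sum_{s'}\mathbb{P}(s'\mid s,a))>0$ (the remaining mass is the termination probability); rewards $R_i:\mathcal{S}\times\mathcal{A}\to[-1,1]$; initial distribution $\rho$ with full support. Stationary policies $\pi_i:\mathcal{S}\to\Delta(\mathcal{A}_i)$ are directly parameterized by $x_i\in\Delta(\mathcal{A}_i)^{\mathcal{S}}$, $x_{i,s}[a_i]=\pi_i(a_i\mid s)$; $\mathcal{X}=\prod_i\Delta(\mathcal{A}_i)^{\mathcal{S}}$. $V_i^\pi(s)=\mathbb{E}_\pi[\sum_{h=0}^HR_i(s_h,a_h)\mid s_0=s]$ ($H$ the last step before termination), $V_i^\pi(\rho)=\mathbb{E}_{s\sim\rho}V_i^\pi(s)$. $F_{\mathcal{G}}(x)=-(\nabla_{x_1}V_1^\pi(\rho),\dots,\nabla_{x_n}V_n^\pi(\rho))$. Unnormalized visitation $\tilde d^\pi_\rho[s]=\mathbb{E}_{s_0\sim\rho}\sum_{h\ge0}\mathbb{P}^\pi(s_h=s\mid s_0)$. $\Lambda(x,x^\star)=(\Lambda_1,\dots,\Lambda_n)$ with $\Lambda_i(x,x^\star)[s,a_i]=\tilde d^{\pi^\star_i,\pi_{-i}}_\rho[s]/\tilde d^{\pi}_\rho[s]$. Single controller $c$: $\mathbb{P}(\cdot\mid s,a)$ depends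 on $a$ only via $a_c$; then $\tilde d^\pi_\rho$ depends only on $\pi_c$ and is written $\tilde d^{\pi_c}_\rho$. $\circ$ is the coordinatewise product. *)

(* Defs.v *)
From HB Require Import structures.
From mathcomp Require Import all_boot all_order all_algebra.
From mathcomp Require Import all_classical all_reals all_analysis.
Set Implicit Arguments. Unset Strict Implicit. Unset Printing Implicit Defensive.
Import Order.TTheory GRing.Theory Num.Theory numFieldNormedType.Exports.
Local Open Scope ring_scope.

Section MarkovGame.
Variables (R : realType) (n : nat) (S : finType) (A : 'I_n -> finType).

Definition jact := {dffun forall i : 'I_n, A i}.

(* directly parameterized (possibly non-normalized) policy profiles:
   x i s a = x_{i,s}[a] = pi_i(a | s) *)
Definition profile := forall i : 'I_n, S -> A i -> R.

Definition inX (x : profile) : Prop :=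
  forall i s, (forall a, 0 <= x i s a) /\ \sum_(a : A i) x i s a = 1.

(* (pi'_i, pi_{-i}) : replace player i's component of x by y *)
Definition deviate (x : profile) (i : 'I_n) (y : S -> A i -> R) : profile :=
  @dfwith _ (fun j : 'I_n => S -> A j -> R) x i y.

Definition perturb (x : profile) (i : 'I_n) (s : S) (a : A i) (t : R) : profile :=
  @dfwith _ (fun j : 'I_n => S -> A j -> R) x i (fun s' b => x i s' b + t * ((s' == s) && (b == a))%:R).

Variables (P : S -> jact -> S -> R) (Rw : 'I_n -> S -> jact -> R) (rho : S -> R).

Definition jprob (x : profile) (s : S) (a : jact) : R := \prod_(i < n) x i s (a i).

Definition Ppi (x : profile) (s s' : S) : R := \sum_(a : jact) jprob x s a * P s a s'.

Definition rpi (x : profile) (i : 'I_n) (s : S) : R :=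
  \sum_(a : jact) jprob x s a * Rw i s a.

(* h-step probabilities P^pi(s_h = s' | s_0 = s) (before termination) *)
Fixpoint Ph (x : profile) (h : nat) (s s' : S) : R :=
  match h with
  | 0 => (s == s')%:R
  | h'.+1 => \sum_(u : S) Ph x h' s u * Ppi x u s'
  end.

Definition V (x : profile) (i : 'I_n) (s : S) : R :=
  limn (series ((fun h => \sum_(s' : S) Ph x h s s' * rpi x i s') : R ^nat)).

Definition Vrho (x : profile) (i : 'I_n) : R := \sum_(s : S) rho s * V x i s.

Definition dvis (x : profile) (s : S) : R :=
  \sum_(s0 : S) rho s0 * limn (series ((fun h => Ph x h s0 s) : R ^nat)).

(* F_G(x) = -(grad_{x_1} V_1(rho), ..., grad_{x_n} V_n(rho)), coordinatewise
   as partial derivatives w.r.t. x_{i,s}[a] *)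
Definition FG (x : profile) (i : 'I_n) (s : S) (a : A i) : R :=
  - derive1 (fun t : R => Vrho (perturb x s a t) i) 0.

Definition Lambda (x xs : profile) (i : 'I_n) (s : S) (a : A i) : R :=
  dvis (deviate x (xs i)) s / dvis x s.

Definition single_controller (c : 'I_n) : Prop :=
  forall s (a a' : jact), a c = a' c -> forall s', P s a s' = P s a' s'.

End MarkovGame.

(* Main.v *)
Require Import Defs.
From HB Require Import structures.
From mathcomp Require Import all_boot all_order all_algebra.
From mathcomp Require Import all_classical all_reals all_analysis.
From mathcomp Require Import ring lra.
Import Order.TTheory GRing.Theory Num.Theory numFieldNormedType.Exports.
Local Open Scope ring_scope.

Module Helpers.
Set Implicit Arguments. Unset Strict Implicit. Unset Printing Implicit Defensive.
Local Open Scope classical_set_scope.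
Local Open Scope ring_scope.

Section Core.
Variables (R : realType) (S : finType).
Implicit Types (M D : S -> S -> R) (r e : S -> R).

Fixpoint mp M h s s' : R := match h with 0 => (s == s')%:R | h'.+1 => \sum_u mp M h' s u * M u s' end.

Definition T M r h s := \sum_s' mp M h s s' * r s'.
Definition Vv M r s := limn (series (fun h => T M r h s)).
Definition rowb M (g : R) := forall u, \sum_w `|M u w| <= g.

Lemma mpS M h s s' : mp M h.+1 s s' = \sum_u mp M h s u * M u s'.
Proof. by []. Qed.

Lemma mp_succl M h s s' : mp M h.+1 s s' = \sum_u M s u * mp M h u s'.
Proof.
elim: h s s' => [|h IH] s s'.
  rewrite mpS (bigD1 s) //= eqxx mul1r big1 ?addr0; last first.
    by move=> u /negbTE; rewrite eq_sym => ->; rewrite mul0r.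
  rewrite (bigD1 s') //= eqxx mulr1 big1 ?addr0 // => u /negbTE ->; by rewrite mulr0.
rewrite mpS.
under eq_bigr => u _ do rewrite IH big_distrl /=.
rewrite exchange_big /=; apply: eq_bigr => v _.
rewrite [RHS]big_distrr /=; apply: eq_bigr => u _; by rewrite mulrA.
Qed.

Lemma T0 M r s : T M r 0 s = r s.
Proof.
rewrite /T (bigD1 s) //= eqxx mul1r big1 ?addr0 // => u /negbTE.
by rewrite eq_sym => ->; rewrite mul0r.
Qed.

Lemma TS M r h s : T M r h.+1 s = \sum_u M s u * T M r h u.
Proof.
rewrite /T; under eq_bigr => s' _ do rewrite mp_succl big_distrl /=.
rewrite exchange_big /=; apply: eq_bigr => u _; rewrite big_distrr /=.
by apply: eq_bigr => v _; rewrite mulrA.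
Qed.

Lemma T_bound M r (g B : R) h s : 0 <= g -> rowb M g -> (forall s, `|r s| <= B) ->
  `|T M r h s| <= B * g ^+ h.
Proof.
move=> g0 hM hr; elim: h s => [|h IH] s; first by rewrite T0 expr0 mulr1.
rewrite TS; apply: le_trans (ler_norm_sum _ _ _) _.
apply: le_trans (_ : \sum_u `|M s u| * (B * g ^+ h) <= _).
  by apply: ler_sum => u _; rewrite normrM ler_wpM2l.
rewrite -big_distrl /= exprS mulrCA.
have B0 : 0 <= B by apply: le_trans (hr s).
apply: ler_wpM2l => //; apply: ler_wpM2r; first by rewrite exprn_ge0.
exact: hM.
Qed.

Lemma T_cvg M r (g : R) s : 0 <= g < 1 -> rowb M g -> cvgn (series (fun h => T M r h s)).
Proof.
move=> /andP[g0 g1] hM; apply: normed_cvg.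
pose B := \sum_u `|r u|.
have hr : forall s, `|r s| <= B.
  move=> u; rewrite /B (bigD1 u) //= lerDl sumr_ge0 // => *.
apply: (@series_le_cvg _ _ (geometric B g)).
- by move=> h /=; exact: normr_ge0.
- move=> h /=; apply: mulr_ge0; last exact: exprn_ge0.
  by apply: sumr_ge0 => u _; exact: normr_ge0.
- by move=> h /=; apply: T_bound.
- by apply: is_cvg_geometric_series; rewrite ger0_norm.
Qed.

Lemma Vv_bellman M r (g : R) s : 0 <= g < 1 -> rowb M g ->
  Vv M r s = r s + \sum_u M s u * Vv M r u.
Proof.
move=> hg hM.
have cv u : series (fun h => T M r h u) @ \oo --> Vv M r u by apply: T_cvg hg hM.
have e : (fun k => series (fun h => T M r h s) k.+1) =
         (fun k => r s + \sum_u M s u * series (fun h => T M r h u) k).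
  apply: funext => k; rewrite /series /= big_nat_recl // T0; congr (_ + _).
  under eq_bigr => h _ do rewrite TS.
  rewrite exchange_big /=; apply: eq_bigr => u _; by rewrite big_distrr.
have h1 : (fun k => series (fun h => T M r h s) k.+1) @ \oo --> Vv M r s.
  by rewrite (cvg_shiftS (fun k => series (fun h => T M r h s) k)); apply: cv.
rewrite e in h1.
have h3 : (fun k => \sum_u M s u * series (fun h => T M r h u) k) @ \oo -->
          \sum_u M s u * Vv M r u.
  apply: (@cvg_big R S +%R 0 xpredT add_continuous nat \oo (index_enum S)
    (fun u k => M s u * series (fun h => T M r h u) k) (fun u => M s u * Vv M r u)) => // u _.
  by apply: cvgMl_tmp; exact: cv u.
have h2 : (fun k => r s + \sum_u M s u * series (fun h => T M r h u) k) @ \oo -->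
          r s + \sum_u M s u * Vv M r u.
  by apply: cvgD => //; exact: cvg_cst.
exact: cvg_unique h1 h2.
Qed.

Lemma contract M (g B : R) (Z w : S -> R) : 0 <= g < 1 -> rowb M g ->
  (forall s, Z s = w s + \sum_u M s u * Z u) -> (forall s, `|w s| <= B) ->
  forall s, `|Z s| <= B / (1 - g).
Proof.
move=> /andP[g0 g1] hM hZ hw s0.
pose m := \big[Num.max/0]_u `|Z u|.
have hZm : forall s, `|Z s| <= m.
  by move=> s; rewrite /m (bigD1 s) //= le_max lexx.
have B0 : 0 <= B by apply: le_trans (hw s0).
have m0 : 0 <= m by apply: le_trans (hZm s0).
have hs : forall s, `|Z s| <= B + g * m.
  move=> s; rewrite hZ; apply: le_trans (ler_normD _ _) _; apply: lerD => //.
  apply: le_trans (ler_norm_sum _ _ _) _.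
  apply: le_trans (_ : \sum_u `|M s u| * m <= _).
    by apply: ler_sum => u _; rewrite normrM ler_wpM2l.
  by rewrite -big_distrl /= ler_wpM2r.
have hm : m <= B + g * m.
  rewrite /m; apply: (big_ind (fun v => v <= B + g * m)) => //.
  - by rewrite addr_ge0 // mulr_ge0.
  - by move=> x y hx hy; rewrite ge_max hx hy.
have g1' : 0 < 1 - g by rewrite subr_gt0.
apply: le_trans (hZm s0) _; rewrite ler_pdivlMr //.
rewrite mulrBr mulr1; lra.
Qed.

Arguments contract {M g B Z w}.
Arguments Vv_bellman {M r g s}.

Lemma Vv_unique M (g : R) r (Z : S -> R) : 0 <= g < 1 -> rowb M g ->
  (forall s, Z s = r s + \sum_u M s u * Z u) -> forall s, Z s = Vv M r s.
Proof.
move=> hg hM hZ s; apply/eqP; rewrite -subr_eq0 -normr_le0.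
have := @contract M g 0 (fun s => Z s - Vv M r s) (fun=> 0) hg hM.
rewrite mul0r; apply => // u.
rewrite hZ (@Vv_bellman _ _ _ u hg hM) add0r.
rewrite opprD addrACA subrr add0r -sumrB; apply: eq_bigr => v _; by rewrite mulrBr.
by rewrite normr0.
Qed.
Lemma deriv_of_bound (f : R -> R) (L C d : R) : 0 < d -> 0 <= C ->
  (forall t : R, t != 0 -> `|t| <= d -> `|t^-1 * (f t - f 0) - L| <= C * `|t|) ->
  derive1 f 0 = L.
Proof.
move=> d0 C0 hf.
rewrite /derive1; apply: cvg_lim; first exact: norm_hausdorff.
apply/cvgrPdist_le => eps eps0.
have e'0 : 0 < Num.min d (eps / (C + 1)).
  by rewrite lt_min d0 divr_gt0 // ltr_wpDl.
near=> t.
have t0 : t != 0 by near: t; exact: nbhs_dnbhs_neq.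
have tb : `|t| <= Num.min d (eps / (C + 1)) by near: t; exact: dnbhs0_le.
move: tb; rewrite le_min => /andP[td te].
rewrite addr0 distrC; apply: le_trans (hf t t0 td) _.
apply: le_trans (_ : (C + 1) * `|t| <= _).
  by rewrite ler_wpM2r // lerDl.
by rewrite mulrC -ler_pdivlMr // ltr_wpDl.
Unshelve. all: by end_near.
Qed.

Lemma le_sum_abs (f : S -> R) u : `|f u| <= \sum_v `|f v|.
Proof. by rewrite (bigD1 u) //= lerDl sumr_ge0. Qed.

Lemma sum_lin2 (a b f : S -> R) (c : R) :
  \sum_u (a u + c * b u) * f u = \sum_u a u * f u + c * \sum_u b u * f u.
Proof.
rewrite big_distrr -big_split /=; apply: eq_bigr => u _; by rewrite mulrDl mulrA.
Qed.

Lemma sum_subr (a f h : S -> R) :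
  \sum_u a u * (f u - h u) = \sum_u a u * f u - \sum_u a u * h u.
Proof. rewrite -sumrB; apply: eq_bigr => u _; by rewrite mulrBr. Qed.

Lemma sum_scal (a f : S -> R) (c : R) :
  \sum_u a u * (c * f u) = c * \sum_u a u * f u.
Proof. rewrite big_distrr; apply: eq_bigr => u _ /=; by rewrite mulrCA. Qed.

Lemma sum_bound (a f : S -> R) (K B : R) : \sum_u `|a u| <= K -> 0 <= B ->
  (forall u, `|f u| <= B) -> `|\sum_u a u * f u| <= K * B.
Proof.
move=> hK B0 hf; apply: le_trans (ler_norm_sum _ _ _) _.
apply: le_trans (_ : \sum_u `|a u| * B <= _).
  by apply: ler_sum => u _; rewrite normrM ler_wpM2l.
by rewrite -big_distrl /= ler_wpM2r.
Qed.

Lemma rowb_pert M D (g K t : R) : rowb M g -> (forall u, \sum_w `|D u w| <= K) ->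
  rowb (fun u w => M u w + t * D u w) (g + `|t| * K).
Proof.
move=> hM hK u.
apply: le_trans (_ : \sum_w (`|M u w| + `|t| * `|D u w|) <= _).
  by apply: ler_sum => w _; rewrite -normrM ler_normD.
rewrite big_split /= -big_distrr /=; apply: lerD => //.
by apply: ler_wpM2l.
Qed.

Lemma deriv_core M D r e (g : R) (rho : S -> R) : 0 <= g < 1 -> rowb M g ->
  derive1 (fun t => \sum_s rho s *
     Vv (fun u w => M u w + t * D u w) (fun u => r u + t * e u) s) 0
  = \sum_s rho s * Vv M (fun u => e u + \sum_w D u w * Vv M r w) s.
Proof.
move=> hg hM; have /andP[g0 g1] := hg.
pose K := \sum_u \sum_w `|D u w|.
have hK : forall u, \sum_w `|D u w| <= K.
  move=> u; rewrite /K [X in _ <= X](bigD1 u) //= lerDl sumr_ge0 // => v _.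
  by rewrite sumr_ge0.
have K0 : 0 <= K by rewrite /K sumr_ge0 // => u _; rewrite sumr_ge0.
pose g' := (1 + g) / 2.
have hg' : 0 <= g' < 1 by apply/andP; split; rewrite /g'; lra.
pose d := (1 - g) / 2 / (K + 1).
have K1 : 0 < K + 1 by lra.
have d0 : 0 < d by rewrite /d divr_gt0 //; lra.
have hdK : g + d * K <= g'.
  have : d * K <= (1 - g) / 2.
    rewrite /d mulrAC ler_pdivrMr //; rewrite ler_wpM2l //; lra.
  rewrite /g'; lra.
have hMt : forall t, `|t| <= d -> rowb (fun u w => M u w + t * D u w) g'.
  move=> t td u; apply: le_trans (@rowb_pert _ _ _ _ t hM hK u) _.
  apply: le_trans hdK; rewrite lerD2l; exact: ler_wpM2r.
pose Rm := \sum_u `|r u|; pose Em := \sum_u `|e u|.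
have Em0 : 0 <= Em by rewrite sumr_ge0.
have Rm0 : 0 <= Rm by rewrite sumr_ge0.
pose Vb := (Rm + d * Em) / (1 - g').
have Vb0 : 0 <= Vb by rewrite /Vb divr_ge0 //; [rewrite addr_ge0 // mulr_ge0 // ltW | lra].
pose V0 := Vv M r.
pose Vt := fun t => Vv (fun u w => M u w + t * D u w) (fun u => r u + t * e u).
have bell0 s : V0 s = r s + \sum_u M s u * V0 u by exact: Vv_bellman hg hM.
have bellt t s : `|t| <= d ->
    Vt t s = r s + t * e s + \sum_u (M s u + t * D s u) * Vt t u.
  by move=> td; exact: (@Vv_bellman _ _ _ s hg' (hMt t td)).
have hVb t s : `|t| <= d -> `|Vt t s| <= Vb.
  move=> td; apply: (contract hg' (hMt t td)) => [u|u]; first exact: bellt.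
  apply: le_trans (ler_normD _ _) _; apply: lerD; first exact: le_sum_abs.
  rewrite normrM; apply: le_trans (_ : d * `|e u| <= _).
    by rewrite ler_wpM2r.
  apply: ler_wpM2l; [exact: ltW | exact: le_sum_abs].
pose Cw := (Em + K * Vb) / (1 - g).
have Weq t s : `|t| <= d -> Vt t s - V0 s =
   t * (e s + \sum_u D s u * Vt t u) + \sum_u M s u * (Vt t u - V0 u).
  move=> td; rewrite (bellt t s td) {1}bell0 sum_lin2 sum_subr; ring.
have hW t s : `|t| <= d -> `|Vt t s - V0 s| <= `|t| * Cw.
  move=> td; rewrite /Cw mulrA.
  apply: (contract hg hM (fun s => Weq t s td)) => u.
  rewrite normrM ler_wpM2l //; apply: le_trans (ler_normD _ _) _.
  apply: lerD; first exact: le_sum_abs.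
  by apply: sum_bound => // v; apply: hVb.
pose G := Vv M (fun u => e u + \sum_w D u w * V0 w).
have bellG s : G s = e s + \sum_w D s w * V0 w + \sum_u M s u * G u.
  exact: Vv_bellman hg hM.
have Cw0 : 0 <= Cw by rewrite /Cw divr_ge0 //; [rewrite addr_ge0 // mulr_ge0 | rewrite subr_ge0 ltW].
have hZ t s : t != 0 -> `|t| <= d ->
    `|t^-1 * (Vt t s - V0 s) - G s| <= `|t| * (K * Cw / (1 - g)).
  move=> t0 td; rewrite mulrA.
  have -> : `|t| * (K * Cw) = K * (`|t| * Cw) by ring.
  apply: (contract hg hM (Z := fun s => t^-1 * (Vt t s - V0 s) - G s) (w := fun s => \sum_u D s u * (Vt t u - V0 u))) => u.
    rewrite (Weq t u td) bellG mulrDr mulrA mulVf // mul1r sum_subr.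
    rewrite !sum_subr sum_scal sum_subr; ring.
  apply: sum_bound => //; first by rewrite mulr_ge0.
  by move=> v; apply: hW.
apply: (@deriv_of_bound _ _ (\sum_s `|rho s| * (K * Cw / (1 - g))) d).
- exact: d0.
- apply: sumr_ge0 => s _; apply: mulr_ge0 => //; apply: divr_ge0; [exact: mulr_ge0 | lra].
move=> t t0 td.
have -> : (fun u w => M u w + 0 * D u w) = M.
  by apply: funext => u; apply: funext => w; rewrite mul0r addr0.
have -> : (fun u => r u + 0 * e u) = r.
  by apply: funext => u; rewrite mul0r addr0.
rewrite -/(Vt t) -/V0 -sumrB big_distrr -sumrB /=.
rewrite big_distrl /=; apply: le_trans (ler_norm_sum _ _ _) _.
apply: ler_sum => s _.
rewrite -/G -mulrBr mulrCA -mulrBr normrM.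
apply: le_trans (ler_wpM2l (normr_ge0 (rho s)) (hZ t s t0 td)) _.
by rewrite le_eqVlt; apply/orP; left; apply/eqP; ring.
Qed.

Arguments Vv_unique {M g r Z}.
Definition dlt (s : S) : S -> R := fun u => (u == s)%:R.

Lemma Vv_decomp M (g : R) r : 0 <= g < 1 -> rowb M g ->
  forall s0, Vv M r s0 = \sum_s r s * Vv M (dlt s) s0.
Proof.
move=> hg hM s1; symmetry.
apply: (Vv_unique hg hM (Z := fun s0 => \sum_s r s * Vv M (dlt s) s0)) => s0.
under eq_bigr => s _ do rewrite (@Vv_bellman _ _ _ s0 hg hM) mulrDr.
rewrite big_split /=; congr (_ + _).
  rewrite (bigD1 s0) //= /dlt eqxx mulr1 big1 ?addr0 // => u /negbTE.
  by rewrite eq_sym => ->; rewrite mulr0.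
under eq_bigr => s _ do rewrite big_distrr /=.
rewrite exchange_big /=; apply: eq_bigr => u _; rewrite big_distrr /=.
by apply: eq_bigr => s _; rewrite mulrCA.
Qed.

Arguments Vv_decomp {M g r}.

Lemma pdl M (g : R) r (V0 : S -> R) (rho : S -> R) : 0 <= g < 1 -> rowb M g ->
  \sum_s (\sum_s0 rho s0 * Vv M (dlt s) s0) * (r s + \sum_w M s w * V0 w - V0 s)
  = \sum_s0 rho s0 * (Vv M r s0 - V0 s0).
Proof.
move=> hg hM.
pose gg := fun s => r s + \sum_w M s w * V0 w - V0 s.
have e : forall s0, Vv M r s0 - V0 s0 = Vv M gg s0.
  apply: (Vv_unique hg hM (Z := fun s0 => Vv M r s0 - V0 s0)) => s0.
  rewrite (@Vv_bellman _ _ _ s0 hg hM) sum_subr /gg; ring.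
under [RHS]eq_bigr => s0 _ do rewrite e (Vv_decomp hg hM) big_distrr /=.
rewrite exchange_big /=; apply: eq_bigr => s _; rewrite big_distrl /=.
by apply: eq_bigr => s0 _; rewrite mulrCA mulrC.
Qed.

Lemma T_ge0 M r h s : (forall u w, 0 <= M u w) -> (forall u, 0 <= r u) -> 0 <= T M r h s.
Proof.
move=> hM hr; elim: h s => [|h IH] s; first by rewrite T0.
by rewrite TS sumr_ge0 // => u _; rewrite mulr_ge0.
Qed.

Lemma Vv_ge0 M (g : R) r s : 0 <= g < 1 -> rowb M g -> (forall u w, 0 <= M u w) ->
  (forall u, 0 <= r u) -> 0 <= Vv M r s.
Proof.
move=> hg hM hM0 hr; apply: limr_ge; first exact: T_cvg hg hM.
near=> k; rewrite /series /=; apply: sumr_ge0 => h _; exact: T_ge0.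
Unshelve. all: by end_near.
Qed.

Arguments Vv_ge0 {M g r s}.

Lemma Vv_dlt_ge1 M (g : R) s : 0 <= g < 1 -> rowb M g -> (forall u w, 0 <= M u w) ->
  1 <= Vv M (dlt s) s.
Proof.
move=> hg hM hM0; rewrite (@Vv_bellman _ _ _ s hg hM) /dlt eqxx lerDl.
apply: sumr_ge0 => u _; rewrite mulr_ge0 //; apply: (Vv_ge0 hg hM hM0) => v.
exact: ler0n.
Qed.

End Core.
Arguments dlt {R S}.


Lemma sum_prod_dep (R : comNzRingType) (I : finType) (T_ : I -> finType)
  (F : forall i, T_ i -> R) :
  \sum_(f : {dffun forall i, T_ i}) \prod_i F i (f i) = \prod_i \sum_(a : T_ i) F i a.
Proof.
pose P_ := fun i => [ffun a : T_ i => F i a].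
transitivity (\prod_i \sum_(a : T_ i) P_ i a); last first.
  by apply: eq_bigr => i _; apply: eq_bigr => a _; rewrite ffunE.
under eq_bigr => i _ do rewrite (big_tag (fun j => P_ j) i).
rewrite bigA_distr_big_dep -big_fprod.
rewrite (reindex (@dffun_of_fprod _ T_)); last first.
  by exists (@fprod_of_dffun _ T_) => f _; [apply: dffun_of_fprodK| apply: fprod_of_dffunK].
apply: eq_bigr => t _; apply: eq_bigr => i _; by rewrite ffunE /P_ ffunE.
Qed.

Lemma fin_lt1 (R : realType) (T : finType) (f : T -> R) : (forall t, f t < 1) ->
  exists g : R, 0 <= g < 1 /\ forall t, f t <= g.
Proof.
move=> hf; exists (\big[Num.max/0]_t Num.max 0 (f t)); split.
  apply/andP; split.
    apply: (big_ind (fun v => 0 <= v)) => //.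
      by move=> x y hx hy; rewrite le_max hx.
    by move=> t _; rewrite le_max lexx.
  apply: (big_ind (fun v => v < 1)) => //.
    by move=> x y hx hy; rewrite gt_max hx hy.
  by move=> t _; rewrite gt_max ltr01 hf.
move=> t; rewrite (bigD1 t) //= le_max; apply/orP; left; rewrite le_max lexx orbT //.
Qed.

Section Game.
Variables (R : realType) (n : nat) (S : finType) (A : 'I_n -> finType).
Variables (P : S -> jact A -> S -> R) (Rw : 'I_n -> S -> jact A -> R) (rho : S -> R).
Hypotheses (P0 : forall s a s', 0 <= P s a s') (P1 : forall s a, \sum_(s' : S) P s a s' < 1).

Implicit Types (x y : profile R S A).

Lemma Ph_mp x h s s' : Ph P x h s s' = mp (Ppi P x) h s s'.
Proof. elim: h s s' => //= h IH s s'; apply: eq_bigr => u _; by rewrite IH. Qed.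

Lemma V_Vv x i s : V P Rw x i s = Vv (Ppi P x) (rpi Rw x i) s.
Proof.
rewrite /V /Vv /T.
have -> : (fun h => \sum_s' Ph P x h s s' * rpi Rw x i s') =
  (fun h => \sum_s' mp (Ppi P x) h s s' * rpi Rw x i s') .
  by apply: funext => h; apply: eq_bigr => s' _; rewrite Ph_mp.
by [].
Qed.

Lemma dvis_Vv x s : dvis P rho x s = \sum_s0 rho s0 * Vv (Ppi P x) (dlt s) s0.
Proof.
apply: eq_bigr => s0 _; congr (_ * _); rewrite /Vv /T.
have -> : (fun h => Ph P x h s0 s) =
  (fun h => \sum_s' mp (Ppi P x) h s0 s' * dlt s s') => //.
apply: funext => h.
rewrite (bigD1 s) //= /dlt eqxx mulr1 big1 ?addr0 ?Ph_mp // => u /negbTE ->.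
by rewrite mulr0.
Qed.

Lemma jprob_sum1 x u : inX x -> \sum_b jprob x u b = 1.
Proof.
move=> hx; rewrite /jprob (@sum_prod_dep R _ A (fun i a => x i u a)); apply: big1 => i _; by case: (hx i u).
Qed.

Lemma jprob_ge0 x u b : inX x -> 0 <= jprob x u b.
Proof. move=> hx; apply: prodr_ge0 => i _; by case: (hx i u). Qed.

Lemma Ppi_ge0 x u w : inX x -> 0 <= Ppi P x u w.
Proof. move=> hx; apply: sumr_ge0 => b _; by rewrite mulr_ge0 ?jprob_ge0. Qed.

Lemma rowb_Ppi x : inX x -> exists g, 0 <= g < 1 /\ rowb (Ppi P x) g.
Proof.
move=> hx.
have [g [hg hgf]] := @fin_lt1 R _ (fun p : S * jact A => \sum_s' P p.1 p.2 s') (fun p => P1 _ _).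
exists g; split => // u.
have -> : \sum_w `|Ppi P x u w| = \sum_b jprob x u b * \sum_w P u b w.
  under eq_bigr => w _ do rewrite ger0_norm ?Ppi_ge0 //.
  rewrite /Ppi exchange_big /=; apply: eq_bigr => b _; by rewrite big_distrr.
apply: le_trans (_ : \sum_b jprob x u b * g <= _).
  apply: ler_sum => b _; rewrite ler_wpM2l ?jprob_ge0 //; exact: (hgf (u, b)).
by rewrite -big_distrl /= jprob_sum1 ?mul1r.
Qed.
Definition cpert x (i : 'I_n) (s : S) (a : A i) (u : S) (b : jact A) : R :=
  ((u == s) && (b i == a))%:R * \prod_(j | j != i) x j u (b j).

Lemma jprob_split x i u b : jprob x u b = x i u (b i) * \prod_(j | j != i) x j u (b j).
Proof. by rewrite /jprob (bigD1 i). Qed.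

Lemma pert_in x i s (a : A i) t u (c : A i) :
  @perturb R n S A x i s a t i u c = x i u c + t * ((u == s) && (c == a))%:R.
Proof. by rewrite /perturb /dfwith; case: eqP => // e; rewrite eq_axiomK. Qed.

Lemma pert_out x i s (a : A i) t j u (c : A j) : i != j ->
  @perturb R n S A x i s a t j u c = x j u c.
Proof. by rewrite /perturb /dfwith; case: eqP. Qed.

Lemma dev_in x i (z : S -> A i -> R) u (c : A i) : @deviate R n S A x i z i u c = z u c.
Proof. by rewrite /deviate /dfwith; case: eqP => // e; rewrite eq_axiomK. Qed.

Lemma dev_out x i (z : S -> A i -> R) j u (c : A j) : i != j -> @deviate R n S A x i z j u c = x j u c.
Proof. by rewrite /deviate /dfwith; case: eqP. Qed.

Lemma dev_fun_out x i (z : S -> A i -> R) j : i != j -> @deviate R n S A x i z j = x j.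
Proof. by rewrite /deviate /dfwith; case: eqP. Qed.

Lemma dev_fun_in x i (z : S -> A i -> R) : @deviate R n S A x i z i = z.
Proof. by rewrite /deviate /dfwith; case: eqP => // e; rewrite eq_axiomK. Qed.

Lemma jprob_pert x i s (a : A i) t u b :
  jprob (perturb x s a t) u b = jprob x u b + t * cpert x s a u b.
Proof.
rewrite (jprob_split _ i) [in RHS](jprob_split _ i) pert_in.
rewrite (eq_bigr (fun j => x j u (b j))); last first.
  by move=> j hj; rewrite pert_out // eq_sym.
rewrite /cpert; ring.
Qed.

Lemma jprob_dev x i (z : S -> A i -> R) u b :
  jprob (deviate x z) u b = z u (b i) * \prod_(j | j != i) x j u (b j).
Proof.
rewrite (jprob_split _ i) dev_in.
rewrite (eq_bigr (fun j => x j u (b j))) //.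
by move=> j hj; rewrite dev_out // eq_sym.
Qed.

Definition Dm x i s (a : A i) u w := \sum_b cpert x s a u b * P u b w.
Definition em x i s (a : A i) u := \sum_b cpert x s a u b * Rw i u b.

Lemma Ppi_pert x i s (a : A i) t :
  Ppi P (perturb x s a t) = fun u w => Ppi P x u w + t * Dm x s a u w.
Proof.
apply: funext => u; apply: funext => w; rewrite /Ppi /Dm.
under eq_bigr => b _ do rewrite jprob_pert mulrDl.
rewrite big_split /= big_distrr /=; congr (_ + _); apply: eq_bigr => b _.
by rewrite mulrA.
Qed.

Lemma rpi_pert x i s (a : A i) t :
  rpi Rw (perturb x s a t) i = fun u => rpi Rw x i u + t * em x s a u.
Proof.
apply: funext => u; rewrite /rpi /em.
under eq_bigr => b _ do rewrite jprob_pert mulrDl.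
rewrite big_split /= big_distrr /=; congr (_ + _); apply: eq_bigr => b _.
by rewrite mulrA.
Qed.

Definition Qf x i s (a : A i) : R :=
  \sum_(b : jact A) ((b i == a)%:R * \prod_(j | j != i) x j s (b j)) *
         (Rw i s b + \sum_w P s b w * V P Rw x i w).

Lemma Vv_lin_ind x i s (a : A i) u :
  em x s a u + \sum_w Dm x s a u w * V P Rw x i w = dlt s u * Qf x s a.
Proof.
rewrite /em /Dm /Qf /dlt.
under [X in _ + X]eq_bigr => w _ do rewrite big_distrl /=.
rewrite exchange_big -big_split /= big_distrr /=; apply: eq_bigr => b _.
rewrite /cpert; case: (eqVneq u s) => [->|ne] /=.
  rewrite mul1r mulrDr; congr (_ + _); rewrite big_distrr /=.
  by apply: eq_bigr => w _; rewrite mulrA.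
rewrite !mul0r add0r big1 // => w _; by rewrite !mul0r.
Qed.

Lemma FG_eq x i s (a : A i) : inX x ->
  FG P Rw rho x s a = - (dvis P rho x s * Qf x s a).
Proof.
move=> hx; have [g [hg hM]] := rowb_Ppi hx.
rewrite /FG.
have -> : (fun t => Vrho P Rw rho (perturb x s a t) i) =
  (fun t => \sum_s0 rho s0 * Vv (fun u w => Ppi P x u w + t * Dm x s a u w)
                                (fun u => rpi Rw x i u + t * em x s a u) s0).
  apply: funext => t; rewrite /Vrho; apply: eq_bigr => s0 _.
  by rewrite V_Vv Ppi_pert rpi_pert.
rewrite (deriv_core _ _ _ _ hg hM); congr (- _).
rewrite dvis_Vv big_distrl /=; apply: eq_bigr => s0 _.
rewrite (Vv_decomp _ hg hM).
have hl : forall u, em x s a u + \sum_w Dm x s a u w * Vv (Ppi P x) (rpi Rw x i) w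
   = dlt s u * Qf x s a.
  move=> u; rewrite -Vv_lin_ind; congr (_ + _); apply: eq_bigr => w _; by rewrite V_Vv.
under eq_bigr => u _ do rewrite hl.
rewrite (bigD1 s) //= /dlt eqxx mul1r big1 ?addr0; first by rewrite [Qf _ _ _ * _]mulrC mulrA.
by move=> u /negbTE ->; rewrite !mul0r.
Qed.
Lemma sum_Qf x i s (z : S -> A i -> R) :
  \sum_(a : A i) z s a * Qf x s a =
  \sum_(b : jact A) (z s (b i) * \prod_(j | j != i) x j s (b j)) *
         (Rw i s b + \sum_w P s b w * V P Rw x i w).
Proof.
rewrite /Qf; under eq_bigr => a _ do rewrite big_distrr /=.
rewrite exchange_big /=; apply: eq_bigr => b _.
rewrite (bigD1 (b i)) //= eqxx mul1r [X in _ + X]big1 ?addr0; first by rewrite !mulrA.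
by move=> a' hne; rewrite eq_sym (negbTE hne) !mul0r mulr0.
Qed.

Lemma expand_jprob (z : profile R S A) i s (W : S -> R) :
  \sum_(b : jact A) jprob z s b * (Rw i s b + \sum_w P s b w * W w) =
  rpi Rw z i s + \sum_w Ppi P z s w * W w.
Proof.
under eq_bigr => b _ do rewrite mulrDr.
rewrite big_split /=; congr (_ + _).
under [RHS]eq_bigr => w _ do rewrite /Ppi big_distrl /=.
rewrite exchange_big /=; apply: eq_bigr => b _; rewrite big_distrr /=.
by apply: eq_bigr => w _; rewrite mulrA.
Qed.


Lemma inX_deviate x (xs : profile R S A) i : inX x -> inX xs -> inX (deviate x (xs i)).
Proof.
move=> hx hxs j u; case: (eqVneq i j) => [<-|ne].
  by rewrite dev_fun_in; apply: hxs.
by rewrite dev_fun_out //; apply: hx.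
Qed.

Lemma dvis_gt0 x s : (forall s, 0 < rho s) -> inX x -> 0 < dvis P rho x s.
Proof.
move=> hrho hx; have [g [hg hM]] := rowb_Ppi hx.
have hM0 : forall u w, 0 <= Ppi P x u w by move=> u w; apply: Ppi_ge0.
rewrite dvis_Vv (bigD1 s) //=.
apply: lt_le_trans (_ : rho s * 1 <= _); first by rewrite mulr1.
rewrite -[rho s * 1]addr0; apply: lerD; first by apply: ler_wpM2l; [exact: ltW | exact: (Vv_dlt_ge1 _ hg hM hM0)].
apply: sumr_ge0 => u _; apply: mulr_ge0; first exact: ltW.
by apply: (Vv_ge0 _ hg hM hM0) => v; rewrite /dlt ler0n.
Qed.

Lemma per_player x (xs : profile R S A) i : (forall s, 0 < rho s) -> inX x -> inX xs ->
  \sum_(s : S) \sum_(a : A i)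
     (x i s a - xs i s a) * (FG P Rw rho x s a * Lambda P rho x xs s a)
  = \sum_s0 rho s0 * (V P Rw (deviate x (xs i)) i s0 - V P Rw x i s0).
Proof.
move=> hrho hx hxs.
set x' := deviate x (xs i).
have hx' : inX x' by apply: inX_deviate.
have [g [hg hM]] := rowb_Ppi hx.
have [g' [hg' hM']] := rowb_Ppi hx'.
have e1 : forall s, \sum_(a : A i)
     (x i s a - xs i s a) * (FG P Rw rho x s a * Lambda P rho x xs s a) =
   dvis P rho x' s * (rpi Rw x' i s + \sum_w Ppi P x' s w * V P Rw x i w - V P Rw x i s).
  move=> s.
  have dx0 : dvis P rho x s != 0 by rewrite gt_eqF // dvis_gt0.
  transitivity (dvis P rho x' s * (\sum_(a : A i) xs i s a * Qf x s a -
                                   \sum_(a : A i) x i s a * Qf x s a)).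
    rewrite -sumrB big_distrr /=; apply: eq_bigr => a _.
    rewrite FG_eq // /Lambda -/x'.
    by field.
  congr (_ * (_ - _)).
    rewrite sum_Qf -expand_jprob; apply: eq_bigr => b _.
    by rewrite jprob_dev.
  rewrite sum_Qf.
  transitivity (rpi Rw x i s + \sum_w Ppi P x s w * V P Rw x i w); last first.
    rewrite V_Vv (Vv_bellman _ _ hg hM); congr (_ + _).
    by apply: eq_bigr => w _; rewrite V_Vv.
  rewrite -expand_jprob; apply: eq_bigr => b _.
  by rewrite (jprob_split _ i).
under eq_bigr => s _ do rewrite e1 dvis_Vv.
rewrite (pdl _ _ _ hg' hM'); apply: eq_bigr => s0 _.
by rewrite [V P Rw x' i s0]V_Vv.
Qed.
Lemma jprob_marg x u c (a : A c) : inX x ->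
  \sum_(b : jact A) jprob x u b * (b c == a)%:R = x c u a.
Proof.
move=> hx.
pose F := fun j (a' : A j) => x j u a' *
   (if j == c then (Tagged A a' == Tagged A a)%:R else 1).
have e : forall b : jact A, jprob x u b * (b c == a)%:R = \prod_j F j (b j).
  move=> b; rewrite (jprob_split _ c) /F [in RHS](bigD1 c) //= eqxx eq_Tagged /=.
  rewrite [X in _ = _ * X](eq_bigr (fun j => x j u (b j))); first by rewrite mulrAC.
  by move=> j hj; rewrite (negbTE hj) mulr1.
under eq_bigr => b _ do rewrite e.
rewrite (@sum_prod_dep R _ A F) (bigD1 c) //= [X in _ * X]big1 ?mulr1.
  rewrite /F eqxx (bigD1 a) //= eq_Tagged /= eqxx mulr1 big1 ?addr0 //.
  by move=> a' hne; rewrite eq_Tagged /= (negbTE hne) mulr0.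
move=> j hj; rewrite /F (negbTE hj).
under eq_bigr do rewrite mulr1.
by case: (hx j u).
Qed.

Lemma Ppi_ctrl c x y : single_controller P c -> inX x -> inX y -> x c = y c ->
  Ppi P x = Ppi P y.
Proof.
move=> hc hx hy exy; apply: funext => u; apply: funext => w; rewrite /Ppi.
case: (pickP (fun _ : jact A => true)) => [b0 _|none]; last first.
  by rewrite !big1 // => b; have := none b.
pose bb := fun a : A c => (finfun (@dfwith _ (fun j => A j) (fun j => b0 j) c a) : jact A).
have hb : forall b : jact A, P u b w = P u (bb (b c)) w.
  move=> b; apply: hc; rewrite /bb ffunE.
  by rewrite /dfwith; case: eqP => // e; rewrite eq_axiomK.
have key : forall z, inX z ->
    \sum_b jprob z u b * P u b w = \sum_(a : A c) z c u a * P u (bb a) w.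
  move=> z hz; under eq_bigr => b _ do rewrite hb.
  transitivity (\sum_b \sum_(a : A c) jprob z u b * (b c == a)%:R * P u (bb a) w).
    apply: eq_bigr => b _; rewrite (bigD1 (b c)) //= eqxx mulr1 big1 ?addr0 //.
    by move=> a' hne; rewrite eq_sym (negbTE hne) mulr0 mul0r.
  rewrite exchange_big /=; apply: eq_bigr => a _.
  by rewrite -big_distrl /= jprob_marg.
by rewrite !key // exy.
Qed.

Lemma dvis_ctrl c x y : single_controller P c -> inX x -> inX y -> x c = y c ->
  dvis P rho x = dvis P rho y.
Proof.
move=> hc hx hy exy; apply: funext => s.
by rewrite !dvis_Vv (Ppi_ctrl hc hx hy exy).
Qed.

End Game.

End Helpers.
Import Helpers.
Unset Implicit Arguments. Set Strict Implicit.

Theorem lemma1 (R : realType) (n : nat) (S : finType) (A : 'I_n -> finType)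
  (P : S -> jact A -> S -> R) (Rw : 'I_n -> S -> jact A -> R) (rho : S -> R)
  (xs : profile R S A) :
  (forall i, 0 < #|A i|)%N ->
  (forall s a s', 0 <= P s a s') ->
  (forall s a, \sum_(s' : S) P s a s' < 1) ->
  (forall i s a, -1 <= Rw i s a <= 1) ->
  (forall s, 0 < rho s) -> \sum_(s : S) rho s = 1 ->
  inX xs ->
  (forall x : profile R S A, inX x ->
     0 <= \sum_(i < n) Vrho P Rw rho (deviate x (xs i)) i
          - \sum_(i < n) Vrho P Rw rho x i) ->
  (forall x : profile R S A, inX x ->
     0 <= \sum_(i < n) \sum_(s : S) \sum_(a : A i)
            (x i s a - xs i s a) * (FG P Rw rho x s a * Lambda P rho x xs s a))
  /\
  (forall c : 'I_n, single_controller P c ->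
   forall x : profile R S A, inX x ->
     0 <= \sum_(i < n) \sum_(s : S) \sum_(a : A i)
            (x i s a - xs i s a) *
            (FG P Rw rho x s a
             * (if i == c then (dvis P rho x s)^-1 else 1)
             * (if i == c then dvis P rho xs s else 1))).
Proof.
move=> hA P0 P1 hRw hrho hrho1 hxs hNE.
have part1 : forall x : profile R S A, inX x ->
     0 <= \sum_(i < n) \sum_(s : S) \sum_(a : A i)
            (x i s a - xs i s a) * (FG P Rw rho x s a * Lambda P rho x xs s a).
  move=> x hx.
  under eq_bigr => i _ do rewrite (per_player Rw P0 P1 i hrho hx hxs).
  have -> : \sum_(i < n) \sum_s0 rho s0 *
      (V P Rw (deviate x (xs i)) i s0 - V P Rw x i s0) =
    \sum_(i < n) Vrho P Rw rho (deviate x (xs i)) i - \sum_(i < n) Vrho P Rw rho x i.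
    rewrite -sumrB; apply: eq_bigr => i _; rewrite /Vrho -sumrB.
    by apply: eq_bigr => s0 _; rewrite mulrBr.
  exact: hNE.
split => // c hc x hx.
suff -> : \sum_(i < n) \sum_(s : S) \sum_(a : A i)
            (x i s a - xs i s a) *
            (FG P Rw rho x s a
             * (if i == c then (dvis P rho x s)^-1 else 1)
             * (if i == c then dvis P rho xs s else 1)) =
   \sum_(i < n) \sum_(s : S) \sum_(a : A i)
            (x i s a - xs i s a) * (FG P Rw rho x s a * Lambda P rho x xs s a).
  exact: part1.
apply: eq_bigr => i _; apply: eq_bigr => s _; apply: eq_bigr => a _.
congr (_ * _); rewrite /Lambda.
have hx' : inX (deviate x (xs i)) by apply: inX_deviate.
have dx0 : dvis P rho x s != 0 by rewrite gt_eqF // (dvis_gt0 P0 P1).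
case: (eqVneq i c) => [eic|nic].
  subst c.
  rewrite (dvis_ctrl rho hc hx' hxs (dev_fun_in _ _)).
  by rewrite -mulrA [_^-1 * _]mulrC.
rewrite (dvis_ctrl rho hc hx' hx (dev_fun_out _ _ nic)).
by rewrite !mulr1 divff // mulr1.
Qed.
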